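(* Let $\{(\mathcal{X}_l,\mathring{\mathcal{X}}_l,p_l)\}_{l\in\mathcal{I}}$ be $B$-$B$-bimodules with specified projections with reduced free product $(\mathcal{X},\mathring{\mathcal{X}},p)$, and for each $l$ let $S_l\subset\mathcal{A}_{l,\mathcal{F}}\cup\mathcal{A}_{l,\mathcal{B}}$. Let $i\ne j$ in $\mathcal{I}$, let $A_1\in\mathcal{A}_i$ be a simple product of elements from $S_i$ and $A_2\in\mathcal{A}_j$ a simple product of elements from $S_j$. If $A_1$ is a Boolean product, then $A_1A_2(1_B)=A_1\big(\mathbb{E}_{\mathcal{L}(\mathcal{X})}(A_2)\big)$, where $\mathbb{E}_{\mathcal{L}(\mathcal{X})}(A_2)\in B\subset\mathcal{X}$.
   Context: $B$ is a unital complex algebra. A $B$-$B$-bimodule with specified projection is a triple $(\mathcal{X},\mathring{\mathcal{X}},p)$ with $\mathcal{X}=B\oplus\mathring{\mathcal{X}}$ a direct sum of $B$-$B$-bimodules and $p(b\oplus\eta)=b$; $\mathcal{L}(\mathcal{X})$ is the algebra of linear operators on $\mathcal{X}$ respecting the bimodule structure and $\mathbb{E}_{\mathcal{L}(\mathcal{X})}(T)=p(T(1_B\oplus0))$. The reduced free product is $\mathcal{X}=B\oplus\mathring{\mathcal{X}}$ with $\mathring{\mathcal{X}}=\bigoplus_{n\ge1}\bigoplus_{i_1\ne\cdots\ne i_n}\mathring{\mathcal{X}}_{i_1}\otimes_B\cdots\otimes_B\mathring{\mathcal{X}}_{i_n}$ (consecutive indices distinct), $p$ the projection onto $B$. For $l\in\mathcal{I}$,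 $\mathcal{X}(l)=B\oplus\bigoplus_{n\ge1}\bigoplus_{i_1\ne\cdots\ne i_n,\ i_1\ne l}\mathring{\mathcal{X}}_{i_1}\otimes_B\cdots\otimes_B\mathring{\mathcal{X}}_{i_n}$, $V_l:\mathcal{X}\to\mathcal{X}_l\otimes_B\mathcal{X}(l)$ is the natural isomorphism, $\lambda_l(a)=V_l^{-1}(a\otimes I)V_l$, $P_l$ the projection onto the summand $B\oplus\mathring{\mathcal{X}}_l$ (zero on other summands), $\mathcal{A}_{l,\mathcal{F}}=\lambda_l(\mathcal{L}(\mathcal{X}_l))$, $\mathcal{A}_{l,\mathcal{B}}=P_l\lambda_l(\mathcal{L}(\mathcal{X}_l))P_l$, $\mathcal{A}_l$ the algebra generated by both. A product $a_1\cdots a_m$ with all $a_k\in S_l$ is a simple product of elements from $S_l$; it is a Boolean product if some $a_k\in S_l\cap\mathcal{A}_{l,\mathcal{B}}$. *)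

(* Defs.v *)
From mathcomp Require Import all_boot all_algebra reals complex.
From Stdlib Require Import ClassicalEpsilon.
Set Implicit Arguments. Unset Strict Implicit. Unset Printing Implicit Defensive.
Import GRing.Theory.
Local Open Scope ring_scope.

(* The K-vector-space structure is the one induced by k |-> k%:A, and the    *)
(* left and right K-actions are required to agree (bimodule of K-algebras).  *)
Record bimod (K : fieldType) (B : algType K) := Bimod {
  bm_sort :> zmodType;
  bm_l : B -> bm_sort -> bm_sort;
  bm_r : bm_sort -> B -> bm_sort;
  bm_lD : forall b x y, bm_l b (x + y) = bm_l b x + bm_l b y;
  bm_Dl : forall b c x, bm_l (b + c) x = bm_l b x + bm_l c x;
  bm_lM : forall b c x, bm_l (b * c) x = bm_l b (bm_l c x);
  bm_l1 : forall x, bm_l 1 x = x;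
  bm_rD : forall b x y, bm_r (x + y) b = bm_r x b + bm_r y b;
  bm_Dr : forall b c x, bm_r x (b + c) = bm_r x b + bm_r x c;
  bm_rM : forall b c x, bm_r x (b * c) = bm_r (bm_r x b) c;
  bm_r1 : forall x, bm_r x 1 = x;
  bm_lr : forall b c x, bm_r (bm_l b x) c = bm_l b (bm_r x c);
  bm_scal : forall (k : K) x, bm_l (k%:A) x = bm_r x (k%:A)
}.

Section FreeProduct.
Variables (K : fieldType) (B : algType K) (I : Type) (Xo : I -> bimod B).

(* The bimodule with specified projection X_l = B (+) Xo_l, p_l = fst.      *)
Definition Xl (l : I) : Type := (B * Xo l)%type.
Definition Xl_l (l : I) (b : B) (x : Xl l) : Xl l := (b * x.1, bm_l b x.2).
Definition Xl_r (l : I) (x : Xl l) (b : B) : Xl l := (x.1 * b, bm_r x.2 b).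
Definition Xl_add (l : I) (x y : Xl l) : Xl l := (x.1 + y.1, x.2 + y.2).

Definition isLXl (l : I) (a : Xl l -> Xl l) : Prop :=
  [/\ forall x y, a (Xl_add x y) = Xl_add (a x) (a y),
      forall b x, a (Xl_l b x) = Xl_l b (a x)
    & forall b x, a (Xl_r x b) = Xl_r (a x) b].

(* The reduced free product, as B (+) (direct sum over nonempty alternating *)
(* words of X°_{i1} (x)_B ... (x)_B X°_{in}), realised as the quotient of   *)
(* formal finite sums of generators by the tensor-product relations.        *)
Definition letter : Type := {l : I & Xo l}.

Fixpoint alt (w : seq letter) : Prop :=
  match w with
  | x :: ((y :: _) as w') => projT1 x <> projT1 y /\ alt w'
  | _ => True
  end.

Definition word : Type := {w : seq letter | w <> [::] /\ alt w}.

(* generators: an element of B, or an elementary tensor xi_1 (x) ... (x) xi_n *)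
Definition gen : Type := (B + word)%type.

(* formal sums: concatenation is addition *)
Inductive feq : seq gen -> seq gen -> Prop :=
| feq_refl s : feq s s
| feq_sym s t : feq s t -> feq t s
| feq_trans s t u : feq s t -> feq t u -> feq s u
| feq_cat s1 s2 t1 t2 : feq s1 t1 -> feq s2 t2 -> feq (s1 ++ s2) (t1 ++ t2)
| feq_comm s t : feq (s ++ t) (t ++ s)
| feq_B0 : feq [:: inl 0] [::]
| feq_BD b1 b2 : feq [:: inl (b1 + b2)] [:: inl b1; inl b2]
| feq_W0 (w : word) u v l :
    sval w = u ++ existT _ l (0 : Xo l) :: v -> feq [:: inr w] [::]
| feq_WD (w w1 w2 : word) u v l (x1 x2 : Xo l) :
    sval w = u ++ existT _ l (x1 + x2) :: v ->
    sval w1 = u ++ existT _ l x1 :: v ->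
    sval w2 = u ++ existT _ l x2 :: v ->
    feq [:: inr w] [:: inr w1; inr w2]
| feq_Wbal (w w' : word) u v l l' (x : Xo l) (y : Xo l') (b : B) :
    sval w = u ++ existT _ l (bm_r x b) :: existT _ l' y :: v ->
    sval w' = u ++ existT _ l x :: existT _ l' (bm_l b y) :: v ->
    feq [:: inr w] [:: inr w'].

Definition X : Type := {c : seq gen -> Prop | exists s, c = feq s}.

Definition cls (s : seq gen) : X := exist _ (feq s) (ex_intro _ s erefl).

Definition repr (x : X) : seq gen :=
  proj1_sig (constructive_indefinite_description _ (proj2_sig x)).

(* operator on X induced by a map on formal sums (well defined whenever the *)
(* map respects feq, which is the case for all operators below)             *)
Definition lift (f : seq gen -> seq gen) (x : X) : X := cls (f (repr x)).

Definition ext (g : gen -> seq gen) (s : seq gen) : seq gen := flatten (map g s).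

(* the generator of a list of letters (zero if it is not an alternating word) *)
Definition mkw (s : seq letter) : seq gen :=
  match excluded_middle_informative (s <> [::] /\ alt s) with
  | left h => [:: inr (exist _ s h)]
  | right _ => [::]
  end.

Definition embB (b : B) : X := cls [:: inl b].
Definition pB_gen (g : gen) : B := match g with inl b => b | inr _ => 0 end.
Definition p (x : X) : B := \sum_(g <- repr x) pB_gen g.

Definition EL (T : X -> X) : B := p (T (embB 1)).

Definition as_l (l : I) (x : letter) : option (Xo l) :=
  match excluded_middle_informative (projT1 x = l) with
  | left e => Some (eq_rect _ (fun k => bm_sort (Xo k)) (projT2 x) _ e)
  | right _ => None
  end.

Definition lact_letter (b : B) (x : letter) : letter :=
  existT _ (projT1 x) (bm_l b (projT2 x)).

(* c . eta  for eta in X(l) given as a (possibly empty = 1_B) list of letters *)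
Definition lact_w (c : B) (rest : seq letter) : seq gen :=
  match rest with
  | [::] => [:: inl c]
  | y :: r => mkw (lact_letter c y :: r)
  end.

(* lambda_l(a) = V_l^{-1} (a (x) I) V_l, computed on generators:            *)
(*  - b in B        : V_l b = (1,0) (x) b                                   *)
(*  - word not starting with l : V_l w = (1,0) (x) w                        *)
(*  - word xi :: rest starting with l : V_l w = (0,xi) (x) rest             *)
(* and (c, zeta) (x) eta = c . eta  (+)  zeta (x) eta.                      *)
Definition lam_gen (l : I) (a : Xl l -> Xl l) (g : gen) : seq gen :=
  match g with
  | inl b =>
      let: (c, z) := a (1, 0) in
      [:: inl (c * b)] ++ mkw [:: existT _ l (bm_r z b)]
  | inr w =>
      match sval w with
      | [::] => [::]
      | x :: rest =>
          match as_l l x with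
          | Some xi =>
              let: (c, z) := a (0, xi) in
              lact_w c rest ++ mkw (existT _ l z :: rest)
          | None =>
              let: (c, z) := a (1, 0) in
              mkw (lact_letter c x :: rest) ++ mkw (existT _ l z :: x :: rest)
          end
      end
  end.

Definition lam (l : I) (a : Xl l -> Xl l) : X -> X := lift (ext (lam_gen a)).

Definition P_gen (l : I) (g : gen) : seq gen :=
  match g with
  | inl b => [:: inl b]
  | inr w =>
      match sval w with
      | [:: x] => if as_l l x is Some _ then [:: g] else [::]
      | _ => [::]
      end
  end.

Definition P (l : I) : X -> X := lift (ext (P_gen l)).

Definition in_AF (l : I) (T : X -> X) : Prop :=
  exists a : Xl l -> Xl l, isLXl a /\ T = lam a.
Definition in_AB (l : I) (T : X -> X) : Prop :=
  exists a : Xl l -> Xl l, isLXl a /\ T = P l \o lam a \o P l.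

(* products a_1 ... a_m of operators (composition, a_m applied first) *)
Definition prodops (ops : seq (X -> X)) : X -> X := foldr (fun f g => f \o g) id ops.

Definition simple_prod (S : (X -> X) -> Prop) (A : X -> X) : Prop :=
  exists ops : seq (X -> X),
    [/\ ops <> [::], forall a, List.In a ops -> S a & A = prodops ops].

Definition boolean_prod (l : I) (S : (X -> X) -> Prop) (A : X -> X) : Prop :=
  exists ops : seq (X -> X),
    [/\ ops <> [::], forall a, List.In a ops -> S a,
        exists2 a, List.In a ops & S a /\ in_AB l a
      & A = prodops ops].

End FreeProduct.

(* Main.v *)
Require Import Defs.
From mathcomp Require Import all_boot all_algebra reals complex.
From Stdlib Require Import ClassicalEpsilon ProofIrrelevance FunctionalExtensionality PropExtensionality.
Set Implicit Arguments. Unset Strict Implicit. Unset Printing Implicit Defensive.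
Import GRing.Theory.
Local Open Scope ring_scope.

Section Proofs.
Variables (K : fieldType) (B : algType K) (I : Type) (Xo : I -> bimod B).

Local Notation gen := (gen Xo).
Local Notation letter := (letter Xo).
Local Notation feq := (@feq K B I Xo).

Lemma selfadd (V : zmodType) (y : V) : y = y + y -> y = 0.
Proof. by move=> h; apply: (@addrI _ y); rewrite addr0 -h. Qed.

Lemma bm_l0x l (x : Xo l) : bm_l 0 x = 0.
Proof. by apply: selfadd; rewrite -bm_Dl addr0. Qed.
Lemma bm_lx0 l (b : B) : bm_l b (0 : Xo l) = 0.
Proof. by apply: selfadd; rewrite -bm_lD addr0. Qed.
Lemma bm_rx0 l (x : Xo l) : bm_r x 0 = 0.
Proof. by apply: selfadd; rewrite -bm_Dr addr0. Qed.

Lemma feq_swap4 (a b c d : seq gen) : feq ((a ++ b) ++ (c ++ d)) ((a ++ c) ++ (b ++ d)).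
Proof.
rewrite -!catA; apply: feq_cat; first exact: feq_refl.
rewrite !catA; apply: feq_cat; last exact: feq_refl.
exact: feq_comm.
Qed.

Lemma cls_eq s t : feq s t -> cls s = cls t.
Proof.
move=> h; rewrite /cls.
have E : feq s = feq t.
  apply: functional_extensionality => u; apply: propositional_extensionality.
  split => h'; [exact: feq_trans (feq_sym h) h' | exact: feq_trans h h'].
move: (ex_intro _ s _) (ex_intro _ t _); rewrite E => p1 p2.
by rewrite (proof_irrelevance _ p1 p2).
Qed.

Lemma repr_cls s : feq (Defs.repr (cls s)) s.
Proof.
rewrite /Defs.repr; case: (constructive_indefinite_description _ _) => t /= ht.
have : feq s s by exact: feq_refl.
by rewrite ht.
Qed.

Definition compat (f : seq gen -> seq gen) := forall s t, feq s t -> feq (f s) (f t).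

Lemma lift_cls f s : compat f -> Defs.lift f (cls s) = cls (f s).
Proof. by move=> hf; rewrite /Defs.lift; apply: cls_eq; apply: hf; exact: repr_cls. Qed.

Lemma ext_cat (g : gen -> seq gen) (s t : seq gen) : ext g (s ++ t) = ext g s ++ ext g t.
Proof. by rewrite /ext map_cat flatten_cat. Qed.

Lemma ext_compat (g : gen -> seq gen) :
  feq (g (inl 0)) [::] ->
  (forall b1 b2, feq (g (inl (b1 + b2))) (g (inl b1) ++ g (inl b2))) ->
  (forall (w : word Xo) u v l, sval w = u ++ existT _ l (0 : Xo l) :: v -> feq (g (inr w)) [::]) ->
  (forall (w w1 w2 : word Xo) u v l (x1 x2 : Xo l),
    sval w = u ++ existT _ l (x1 + x2) :: v ->
    sval w1 = u ++ existT _ l x1 :: v ->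
    sval w2 = u ++ existT _ l x2 :: v ->
    feq (g (inr w)) (g (inr w1) ++ g (inr w2))) ->
  (forall (w w' : word Xo) u v l l' (x : Xo l) (y : Xo l') (b : B),
    sval w = u ++ existT _ l (bm_r x b) :: existT _ l' y :: v ->
    sval w' = u ++ existT _ l x :: existT _ l' (bm_l b y) :: v ->
    feq (g (inr w)) (g (inr w'))) ->
  compat (ext g).
Proof.
move=> h0 hD hW0 hWD hWb s t H; elim: s t / H.
- move=> s; exact: feq_refl.
- by move=> s t _ h; apply: feq_sym.
- by move=> s t u _ h1 _ h2; apply: feq_trans h1 h2.
- by move=> s1 s2 t1 t2 _ h1 _ h2; rewrite !ext_cat; apply: feq_cat.
- by move=> s t; rewrite !ext_cat; apply: feq_comm.
- rewrite /ext /= cats0; exact: h0.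
- by move=> b1 b2; rewrite /ext /= !cats0; apply: hD.
- by move=> w u v l e; rewrite /ext /= cats0; apply: hW0 e.
- by move=> w w1 w2 u v l x1 x2 e e1 e2; rewrite /ext /= !cats0; apply: hWD e e1 e2.
- by move=> w w' u v l l' x y b e e'; rewrite /ext /= !cats0; apply: hWb e e'.
Qed.


Lemma alt_idx (s1 s2 : seq letter) :
  map (@projT1 I _) s1 = map (@projT1 I _) s2 -> alt s1 -> alt s2.
Proof.
elim: s1 s2 => [|x s1 IH] [|y s2] //= [e1 e2].
case: s1 s2 IH e2 => [|x' s1] [|y' s2] //= IH [e3 e4] [h1 h2].
split; first by rewrite -e1 -e3.
by apply: (IH (y' :: s2)) => //=; rewrite e3 e4.
Qed.

Lemma mkw_spec (s : seq letter) :
  mkw s = [::] \/ exists w : word Xo, mkw s = [:: inr w] /\ sval w = s.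
Proof.
rewrite /mkw; case: excluded_middle_informative => h; last by left.
by right; exists (exist _ s h).
Qed.

Lemma mkw_cases (s1 s2 : seq letter) :
  map (@projT1 I _) s1 = map (@projT1 I _) s2 ->
  (mkw s1 = [::] /\ mkw s2 = [::]) \/
  exists w1 w2 : word Xo, [/\ mkw s1 = [:: inr w1], mkw s2 = [:: inr w2],
     sval w1 = s1 & sval w2 = s2].
Proof.
move=> e; rewrite /mkw.
case: excluded_middle_informative => h1; case: excluded_middle_informative => h2.
- by right; exists (exist _ s1 h1), (exist _ s2 h2).
- exfalso; apply: h2; case: h1 => n1 a1; split; last exact: alt_idx e a1.
  by move=> z; subst s2; move: e n1; case: (s1).
- exfalso; apply: h1; case: h2 => n2 a2; split; last exact: alt_idx (esym e) a2.
  by move=> z; subst s1; move: e n2; case: (s2).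
- by left.
Qed.

Lemma M0 (s u v : seq letter) l : s = u ++ existT _ l (0 : Xo l) :: v -> feq (mkw s) [::].
Proof.
move=> e; rewrite /mkw; case: excluded_middle_informative => h; last exact: feq_refl.
exact: (@feq_W0 _ _ _ _ (exist _ s h) u v l e).
Qed.

Lemma MD (u v : seq letter) l (x1 x2 : Xo l) :
  feq (mkw (u ++ existT _ l (x1 + x2) :: v))
      (mkw (u ++ existT _ l x1 :: v) ++ mkw (u ++ existT _ l x2 :: v)).
Proof.
have m1 : map (@projT1 I _) (u ++ existT _ l (x1 + x2) :: v) =
          map (@projT1 I _) (u ++ existT _ l x1 :: v) by rewrite !map_cat.
have m2 : map (@projT1 I _) (u ++ existT _ l (x1 + x2) :: v) =
          map (@projT1 I _) (u ++ existT _ l x2 :: v) by rewrite !map_cat.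
case: (mkw_cases m1) => [[E E1]|[w [w1 [E E1 e e1]]]];
  case: (mkw_cases m2) => [[E' E2]|[w' [w2 [E' E2 e' e2]]]];
  rewrite E E1 E2 //; rewrite E' in E; try discriminate.
- exact: feq_refl.
- case: E => <-; exact: (feq_WD e' e1 e2).
Qed.

Lemma MB (u v : seq letter) l l' (x : Xo l) (y : Xo l') (b : B) :
  feq (mkw (u ++ existT _ l (bm_r x b) :: existT _ l' y :: v))
      (mkw (u ++ existT _ l x :: existT _ l' (bm_l b y) :: v)).
Proof.
have m1 : map (@projT1 I _) (u ++ existT _ l (bm_r x b) :: existT _ l' y :: v) =
          map (@projT1 I _) (u ++ existT _ l x :: existT _ l' (bm_l b y) :: v)
  by rewrite !map_cat.
case: (mkw_cases m1) => [[-> ->]|[w [w1 [-> -> e e1]]]].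
- exact: feq_refl.
- exact: (feq_Wbal e e1).
Qed.

Lemma as_l_same l (x : Xo l) : as_l l (existT _ l x) = Some x.
Proof.
rewrite /as_l; case: excluded_middle_informative => e /=; last by case: e.
by have -> : e = erefl by apply: proof_irrelevance.
Qed.

Lemma as_l_diff l l' (x : Xo l') : l' <> l -> as_l l (existT _ l' x) = None.
Proof. by move=> ne; rewrite /as_l; case: excluded_middle_informative. Qed.

Lemma as_l_Some l (y : letter) xi : as_l l y = Some xi -> y = existT _ l xi.
Proof.
rewrite /as_l; case: excluded_middle_informative => // e [<-].
by case: y e => l' y' /= e; subst l.
Qed.

Lemma as_l_None l (y : letter) : as_l l y = None -> projT1 y <> l.
Proof. by case: y => l' y' h /= e; subst l'; rewrite as_l_same in h. Qed.

Lemma p_compat (s t : seq gen) : feq s t -> \sum_(g <- s) pB_gen g = \sum_(g <- t) pB_gen g.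
Proof.
elim: s t /.
- by [].
- by move=> s t _ ->.
- by move=> s t u _ -> _ ->.
- by move=> s1 s2 t1 t2 _ h1 _ h2; rewrite !big_cat h1 h2.
- by move=> s t; rewrite !big_cat [X in X = _]addrC.
- by rewrite big_seq1 big_nil.
- by move=> b1 b2; rewrite !big_cons big_nil /= !addr0.
- by move=> *; rewrite big_seq1 big_nil.
- by move=> *; rewrite !big_cons big_nil /= !addr0.
- by move=> *; rewrite !big_seq1.
Qed.

Lemma p_cls (s : seq gen) : p (cls s) = \sum_(g <- s) pB_gen g.
Proof. exact: p_compat (repr_cls s). Qed.


Section Lam.
Variables (l : I) (a : Xl Xo l -> Xl Xo l) (ha : isLXl a).

Definition lamw (s : seq letter) : seq gen :=
  match s with
  | [::] => [::]
  | x :: rest =>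
      match as_l l x with
      | Some xi =>
          let: (c, z) := a (0, xi) in
          lact_w c rest ++ mkw (existT _ l z :: rest)
      | None =>
          let: (c, z) := a (1, 0) in
          mkw (lact_letter c x :: rest) ++ mkw (existT _ l z :: x :: rest)
      end
  end.

Lemma lam_gen_inr (w : word Xo) : lam_gen a (inr w) = lamw (sval w).
Proof. by []. Qed.

Lemma a00 : a (0, 0) = (0, 0).
Proof.
case: ha => hadd _ _; move: (hadd (0, 0) (0, 0)); rewrite /Xl_add /= !addr0.
case: (a (0, 0)) => y1 y2 /= [h1 h2].
by rewrite (selfadd h1) (selfadd h2).
Qed.

Lemma aD (x1 x2 : Xo l) : a (0, x1 + x2) =
  ((a (0, x1)).1 + (a (0, x2)).1, (a (0, x1)).2 + (a (0, x2)).2).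
Proof. by case: ha => hadd _ _; move: (hadd (0, x1) (0, x2)); rewrite /Xl_add /= addr0. Qed.

Lemma aR (x : Xo l) (b : B) : a (0, bm_r x b) = ((a (0, x)).1 * b, bm_r (a (0, x)).2 b).
Proof. by case: ha => _ _ hr; move: (hr b (0, x)); rewrite /Xl_r /= mul0r. Qed.

End Lam.

Lemma lact_w0 (c : B) (u v : seq letter) l0 :
  feq (lact_w c (u ++ existT _ l0 (0 : Xo l0) :: v)) [::].
Proof.
case: u => [|y u] /=.
- rewrite /lact_letter /= bm_lx0; exact: (@M0 _ [::] v l0 erefl).
- exact: (@M0 _ (lact_letter c y :: u) v l0 erefl).
Qed.

Lemma lact_wD (c : B) (u v : seq letter) l0 (x1 x2 : Xo l0) :
  feq (lact_w c (u ++ existT _ l0 (x1 + x2) :: v))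
      (lact_w c (u ++ existT _ l0 x1 :: v) ++ lact_w c (u ++ existT _ l0 x2 :: v)).
Proof.
case: u => [|y u] /=.
- rewrite /lact_letter /= bm_lD; exact: (MD [::] v _ _).
- exact: (MD (lact_letter c y :: u) v _ _).
Qed.

Lemma lact_wB (c : B) (u v : seq letter) l0 l1 (x : Xo l0) (y : Xo l1) (b : B) :
  feq (lact_w c (u ++ existT _ l0 (bm_r x b) :: existT _ l1 y :: v))
      (lact_w c (u ++ existT _ l0 x :: existT _ l1 (bm_l b y) :: v)).
Proof.
case: u => [|y' u] /=.
- rewrite /lact_letter /= -bm_lr; exact: (MB [::] v _ _ _).
- exact: (MB (lact_letter c y' :: u) v _ _ _).
Qed.

Lemma lact_wc (c1 c2 : B) (v : seq letter) :
  feq (lact_w (c1 + c2) v) (lact_w c1 v ++ lact_w c2 v).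
Proof.
case: v => [|y v] /=; first exact: feq_BD.
rewrite /lact_letter /= bm_Dl; exact: (MD [::] v _ _).
Qed.

Section Lam2.
Variables (l : I) (a : Xl Xo l -> Xl Xo l) (ha : isLXl a).

Lemma L0 (u v : seq letter) l0 :
  feq (lamw a (u ++ existT _ l0 (0 : Xo l0) :: v)) [::].
Proof.
case: u => [|y u] /=.
- case: (classic (l0 = l)) => [e|ne].
  + subst l0; rewrite as_l_same (a00 ha) /=.
    apply: (feq_cat (t1 := [::]) (t2 := [::])); last exact: (@M0 _ [::] v l erefl).
    case: v => [|y v] /=; first exact: feq_B0.
    rewrite /lact_letter /= bm_l0x; exact: (@M0 _ [::] v _ erefl).
  + rewrite as_l_diff //; case: (a (1, 0)) => c z.
    apply: (feq_cat (t1 := [::]) (t2 := [::])).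
    * rewrite /lact_letter /= bm_lx0; exact: (@M0 _ [::] v _ erefl).
    * exact: (@M0 _ [:: existT _ l z] v _ erefl).
- case: (as_l l y) => [xi|].
  + case: (a (0, xi)) => c z.
    apply: (feq_cat (t1 := [::]) (t2 := [::])); first exact: lact_w0.
    exact: (@M0 _ (existT _ l z :: u) v _ erefl).
  + case: (a (1, 0)) => c z.
    apply: (feq_cat (t1 := [::]) (t2 := [::])).
    * exact: (@M0 _ (lact_letter c y :: u) v _ erefl).
    * exact: (@M0 _ (existT _ l z :: y :: u) v _ erefl).
Qed.

Lemma LD (u v : seq letter) l0 (x1 x2 : Xo l0) :
  feq (lamw a (u ++ existT _ l0 (x1 + x2) :: v))
      (lamw a (u ++ existT _ l0 x1 :: v) ++ lamw a (u ++ existT _ l0 x2 :: v)).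
Proof.
case: u => [|y u] /=.
- case: (classic (l0 = l)) => [e|ne].
  + subst l0; rewrite !as_l_same (aD ha).
    case: (a (0, x1)) => c1 z1; case: (a (0, x2)) => c2 z2 /=.
    apply: feq_trans (feq_swap4 _ _ _ _).
    apply: feq_cat; first exact: lact_wc.
    exact: (MD [::] v _ _).
  + rewrite !as_l_diff //; case: (a (1, 0)) => c z.
    apply: feq_trans (feq_swap4 _ _ _ _).
    apply: feq_cat.
    * rewrite /lact_letter /= bm_lD; exact: (MD [::] v _ _).
    * exact: (MD [:: existT _ l z] v _ _).
- case: (as_l l y) => [xi|].
  + case: (a (0, xi)) => c z.
    apply: feq_trans (feq_swap4 _ _ _ _).
    apply: feq_cat; first exact: lact_wD.
    exact: (MD (existT _ l z :: u) v _ _).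
  + case: (a (1, 0)) => c z.
    apply: feq_trans (feq_swap4 _ _ _ _).
    apply: feq_cat.
    * exact: (MD (lact_letter c y :: u) v _ _).
    * exact: (MD (existT _ l z :: y :: u) v _ _).
Qed.

Lemma LB (u v : seq letter) l0 l1 (x : Xo l0) (y : Xo l1) (b : B) :
  feq (lamw a (u ++ existT _ l0 (bm_r x b) :: existT _ l1 y :: v))
      (lamw a (u ++ existT _ l0 x :: existT _ l1 (bm_l b y) :: v)).
Proof.
case: u => [|y' u] /=.
- case: (classic (l0 = l)) => [e|ne].
  + subst l0; rewrite !as_l_same (aR ha).
    case: (a (0, x)) => c z /=.
    apply: feq_cat.
    * rewrite /lact_letter /= bm_lM; exact: feq_refl.
    * exact: (MB [::] v _ _ _).
  + rewrite !as_l_diff //; case: (a (1, 0)) => c z.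
    apply: feq_cat.
    * rewrite /lact_letter /= -bm_lr; exact: (MB [::] v _ _ _).
    * exact: (MB [:: existT _ l z] v _ _ _).
- case: (as_l l y') => [xi|].
  + case: (a (0, xi)) => c z.
    apply: feq_cat; first exact: lact_wB.
    exact: (MB (existT _ l z :: u) v _ _ _).
  + case: (a (1, 0)) => c z.
    apply: feq_cat.
    * exact: (MB (lact_letter c y' :: u) v _ _ _).
    * exact: (MB (existT _ l z :: y' :: u) v _ _ _).
Qed.

Lemma lam_compat : compat (ext (lam_gen a)).
Proof.
apply: ext_compat.
- rewrite /lam_gen; case: (a (1, 0)) => c z; rewrite mulr0 bm_rx0.
  apply: (feq_cat (t1 := [::]) (t2 := [::])); first exact: feq_B0.
  exact: (@M0 _ [::] [::] l erefl).
- move=> b1 b2; rewrite /lam_gen; case: (a (1, 0)) => c z; rewrite mulrDr bm_Dr.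
  apply: feq_trans (feq_swap4 _ _ _ _).
  apply: feq_cat; first exact: feq_BD.
  exact: (MD [::] [::] _ _).
- by move=> w u v l0 e; rewrite lam_gen_inr e; apply: L0.
- move=> w w1 w2 u v l0 x1 x2 e e1 e2; rewrite !lam_gen_inr e e1 e2; exact: LD.
- move=> w w' u v l0 l1 x y b e e'; rewrite !lam_gen_inr e e'; exact: LB.
Qed.

End Lam2.


Lemma P_gen_sub l (g : gen) : P_gen l g = [:: g] \/ P_gen l g = [::].
Proof.
case: g => [b|w] /=; first by left.
case: (sval w) => [|x [|y r]]; try by right.
by case: (as_l l x); [left|right].
Qed.

Lemma P_compat l : compat (ext (P_gen l)).
Proof.
apply: ext_compat.
- exact: feq_B0.
- move=> b1 b2; exact: feq_BD.
- move=> w u v l0 e; case: (P_gen_sub l (inr w)) => ->; last exact: feq_refl.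
  exact: feq_W0 e.
- move=> w w1 w2 u v l0 x1 x2 e e1 e2; rewrite /P_gen.
  have hW := feq_WD e e1 e2.
  rewrite e e1 e2; case: u e e1 e2 => [|y [|y2 u]] e e1 e2 /=; try exact: feq_refl.
  case: v e e1 e2 => [|y v] e e1 e2 /=; try exact: feq_refl.
  case: (classic (l0 = l)) => [E|ne].
  + subst l0; rewrite !as_l_same; exact: hW.
  + rewrite !as_l_diff //; exact: feq_refl.
- move=> w w' u v l0 l1 x y b e e'; rewrite /P_gen e e'.
  case: u e e' => [|y0 [|y2 u]] e e' /=; exact: feq_refl.
Qed.

Definition rep (T : X Xo -> X Xo) (F : seq gen -> seq gen) :=
  [/\ compat F, forall s, T (cls s) = cls (F s),
      forall s t, F (s ++ t) = F s ++ F t & F [::] = [::]].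

Lemma rep_ext (g : gen -> seq gen) : compat (ext g) -> rep (Defs.lift (ext g)) (ext g).
Proof.
move=> h; split => //.
- by move=> s; apply: lift_cls.
- by move=> s t; apply: ext_cat.
Qed.

Lemma rep_comp T1 F1 T2 F2 : rep T1 F1 -> rep T2 F2 -> rep (T1 \o T2) (F1 \o F2).
Proof.
case=> c1 e1 a1 n1 [c2 e2 a2 n2]; split.
- by move=> s t h; apply: c1; apply: c2.
- by move=> s /=; rewrite e2 e1.
- by move=> s t /=; rewrite a2 a1.
- by rewrite /= n2 n1.
Qed.

Lemma rep_id : rep id id.
Proof. by split. Qed.

Lemma rep_transfer T T' F : rep T F -> (forall x, T' x = T x) -> rep T' F.
Proof. by case=> c e a n h; split => // s; rewrite h. Qed.

Lemma rep_lam l (a : Xl Xo l -> Xl Xo l) : isLXl a -> rep (lam a) (ext (lam_gen a)).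
Proof. move=> ha; exact: rep_ext (lam_compat ha). Qed.

Lemma rep_P l : rep (Defs.P l) (ext (P_gen l)).
Proof. exact: rep_ext (P_compat l). Qed.

Lemma rep_AB l (a : Xl Xo l -> Xl Xo l) : isLXl a ->
  rep (Defs.P l \o lam a \o Defs.P l) (ext (P_gen l) \o ext (lam_gen a) \o ext (P_gen l)).
Proof.
move=> ha; apply: rep_comp; last exact: rep_P.
apply: rep_comp; [exact: rep_P | exact: rep_lam].
Qed.

Fixpoint allP (Q : gen -> Prop) (s : seq gen) : Prop :=
  if s is g :: s' then Q g /\ allP Q s' else True.

Lemma allP_cat Q (s t : seq gen) : allP Q s -> allP Q t -> allP Q (s ++ t).
Proof. by elim: s => //= g s IH [h1 h2] ht; split => //; apply: IH. Qed.

Lemma allP_ext Q1 Q2 (g : gen -> seq gen) s :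
  (forall x, Q1 x -> allP Q2 (g x)) -> allP Q1 s -> allP Q2 (ext g s).
Proof.
move=> h; elim: s => //= x s IH [h1 h2].
exact: allP_cat (h _ h1) (IH h2).
Qed.

Lemma allP_P l Q s : allP Q s -> allP Q (ext (P_gen l) s).
Proof.
apply: allP_ext => x hx; case: (P_gen_sub l x) => -> //=.
Qed.

Definition pres Q (F : seq gen -> seq gen) := forall s, allP Q s -> allP Q (F s).

Definition Hj (j : I) (g : gen) : Prop :=
  match g with inl _ => True | inr w => exists x, sval w = [:: x] /\ projT1 x = j end.

Lemma Hj_mkw j (x : letter) : projT1 x = j -> allP (Hj j) (mkw [:: x]).
Proof.
move=> hx; case: (mkw_spec [:: x]) => [->|[w [-> e]]] //=.
by split => //; exists x.
Qed.

Lemma lam_Hj j (a : Xl Xo j -> Xl Xo j) g : Hj j g -> allP (Hj j) (lam_gen a g).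
Proof.
case: g => [b|w] /=.
- move=> _; case: (a (1, 0)) => c z /=; split => //; exact: Hj_mkw.
- case=> x [e hx]; rewrite e; case: x e hx => l' y /= e hx; subst l'.
  rewrite as_l_same; case: (a (0, y)) => c z /=; split => //; exact: Hj_mkw.
Qed.

Definition Gs (i : I) (s : seq letter) : Prop :=
  match s with [:: x] => as_l i x = None | _ => True end.

Definition Gi (i : I) (g : gen) : Prop :=
  match g with inl _ => False | inr w => Gs i (sval w) end.

Lemma Gi_mkw i s : Gs i s -> allP (Gi i) (mkw s).
Proof. by move=> h; case: (mkw_spec s) => [->|[w [-> e]]] //=; rewrite e. Qed.

Lemma lam_Gi i (a : Xl Xo i -> Xl Xo i) g : Gi i g -> allP (Gi i) (lam_gen a g).
Proof.
case: g => [b|w] // hG; change (allP (Gi i) (lamw a (sval w))); rewrite /Gi in hG.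
have halt := (proj2_sig w).2.
move: halt hG; case: (sval w) => [|x rest] //=.
case E: (as_l i x) => [xi|].
- case: rest => [|y r]; first by [].
  move=> [hxy _] _; have ex := as_l_Some E; rewrite ex /= in hxy.
  case: (a (0, xi)) => c z /=.
  apply: allP_cat; apply: Gi_mkw => //.
  case: r => //=; rewrite /lact_letter as_l_diff //.
  by move=> h; apply: hxy.
- move=> _ _; case: (a (1, 0)) => c z.
  apply: allP_cat; apply: Gi_mkw => //.
  case: rest => //=; rewrite /lact_letter as_l_diff //.
  exact: as_l_None E.
Qed.

Lemma P_kill i s : allP (Gi i) s -> ext (P_gen i) s = [::].
Proof.
elim: s => // g s IH [hg hs]; change (P_gen i g ++ ext (P_gen i) s = [::]); rewrite IH // cats0.
case: g hg => [b|w] //=; rewrite /Gi /Gs.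
by case: (sval w) => [|x [|y r]] //= ->.
Qed.

Lemma op_i_pres i T : in_AF i T \/ in_AB i T -> exists F, rep T F /\ pres (Gi i) F.
Proof.
case=> [[a [ha ->]]|[a [ha ->]]].
- exists (ext (lam_gen a)); split; first exact: rep_lam ha.
  move=> s; apply: allP_ext => x; exact: lam_Gi.
- exists (ext (P_gen i) \o ext (lam_gen a) \o ext (P_gen i)); split.
  + exact: rep_AB ha.
  + move=> s hs /=; apply: allP_P; apply: allP_ext (allP_P _ hs) => x; exact: lam_Gi.
Qed.

Lemma op_i_kill i T : in_AB i T -> exists F, rep T F /\ forall s, allP (Gi i) s -> F s = [::].
Proof.
case=> [a [ha ->]].
exists (ext (P_gen i) \o ext (lam_gen a) \o ext (P_gen i)); split.
- exact: rep_AB ha.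
- by move=> s hs; rewrite /= (P_kill hs).
Qed.

Lemma op_j_pres j T : in_AF j T \/ in_AB j T -> exists F, rep T F /\ pres (Hj j) F.
Proof.
case=> [[a [ha ->]]|[a [ha ->]]].
- exists (ext (lam_gen a)); split; first exact: rep_lam ha.
  move=> s; apply: allP_ext => x; exact: lam_Hj.
- exists (ext (P_gen j) \o ext (lam_gen a) \o ext (P_gen j)); split.
  + exact: rep_AB ha.
  + move=> s hs /=; apply: allP_P; apply: allP_ext (allP_P _ hs) => x; exact: lam_Hj.
Qed.

Lemma prodops_pres Q (ops : seq (X Xo -> X Xo)) :
  (forall a, List.In a ops -> exists F, rep a F /\ pres Q F) ->
  exists F, rep (prodops ops) F /\ pres Q F.
Proof.
elim: ops => [|a ops IH] h.
- by exists id; split; [exact: rep_id | move=> s].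
- have [Fa [ra pa]] := h a (or_introl erefl).
  have [F [r p]] := IH (fun b hb => h b (or_intror hb)).
  exists (Fa \o F); split; first exact: rep_comp ra r.
  by move=> s hs /=; apply: pa; apply: p.
Qed.

Lemma prodops_catE (ops1 ops2 : seq (X Xo -> X Xo)) x :
  prodops (ops1 ++ ops2) x = prodops ops1 (prodops ops2 x).
Proof. by elim: ops1 => //= a o IH; rewrite IH. Qed.

Definition isw (g : gen) : bool := if g is inr _ then true else false.

Lemma decomp (s : seq gen) :
  feq s ([:: inl (\sum_(g <- s) pB_gen g)] ++ filter isw s).
Proof.
elim: s => [|g s IH].
- rewrite big_nil /=; apply: feq_sym; exact: feq_B0.
- rewrite big_cons; move: IH; set S := \sum_(g <- s) pB_gen g => IH.
  set f := filter isw s.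
  case: g => [b|w] /=.
  + have h1 : feq ([:: inl (b + S)] ++ f) ([:: inl b; inl S] ++ f)
      := feq_cat (feq_BD Xo _ _) (feq_refl _).
    have h2 : feq ([:: inl b] ++ s) ([:: inl b] ++ ([:: inl S] ++ f))
      := feq_cat (feq_refl _) IH.
    exact: feq_sym (feq_trans h1 (feq_sym h2)).
  + rewrite add0r.
    have h2 : feq ([:: inr w] ++ s) ([:: inr w] ++ ([:: inl S] ++ f))
      := feq_cat (feq_refl _) IH.
    have h3 : feq ([:: inr w] ++ [:: inl S]) ([:: inl S] ++ [:: inr w])
      := feq_comm _ _.
    have h4 : feq (([:: inr w] ++ [:: inl S]) ++ f) (([:: inl S] ++ [:: inr w]) ++ f)
      := feq_cat h3 (feq_refl _).
    exact: feq_trans h2 h4.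
Qed.

Lemma wp_Gi i j (hij : i <> j) s : allP (Hj j) s -> allP (Gi i) (filter isw s).
Proof.
elim: s => //= g s IH [hg hs]; case: g hg => [b|w] /= hg; first exact: IH.
split; last exact: IH.
case: hg => x [e hx]; rewrite /Gs e; case: x e hx => l' y /= e hx; subst l'.
by rewrite as_l_diff // => h; apply: hij.
Qed.

Lemma main_gen (S : I -> (X Xo -> X Xo) -> Prop)
  (hS : forall (l : I) (T : X Xo -> X Xo), S l T -> in_AF l T \/ in_AB l T)
  (i j : I) (hij : i <> j) (A1 A2 : X Xo -> X Xo)
  (hA2 : simple_prod (S j) A2)
  (hbool : boolean_prod i (S i) A1) :
  A1 (A2 (embB Xo 1)) = A1 (embB Xo (EL A2)).
Proof.
case: hA2 => ops2 [_ hops2 E2].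
have [F2 [[c2 e2 cat2 nil2] p2]] : exists F, rep A2 F /\ pres (Hj j) F.
  rewrite E2; apply: prodops_pres => T hT; apply: op_j_pres; exact: hS (hops2 T hT).
case: hbool => ops1 [_ hops1 [a ha [Sa ABa]] E1].
case: (List.in_split _ _ ha) => l1 [l2 E].
have [G1 [r1 _]] : exists F, rep (prodops l1) F /\ pres (Gi i) F.
  apply: prodops_pres => T hT; apply: op_i_pres; apply: hS; apply: hops1.
  by rewrite E; apply: List.in_or_app; left.
have [G3 [r3 q3]] : exists F, rep (prodops l2) F /\ pres (Gi i) F.
  apply: prodops_pres => T hT; apply: op_i_pres; apply: hS; apply: hops1.
  by rewrite E; apply: List.in_or_app; right; right.
have [Ga [ra ka]] := op_i_kill ABa.
have [c1 e1 cat1 nil1] : rep A1 (G1 \o (Ga \o G3)).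
  apply: rep_transfer (rep_comp r1 (rep_comp ra r3)) _ => x.
  by rewrite E1 E prodops_catE.
rewrite /EL /embB e2 p_cls.
set s2 := F2 [:: inl 1].
rewrite (cls_eq (decomp s2)) !e1 cat1.
have hs2 : allP (Hj j) s2 by apply: p2.
have -> : (G1 \o (Ga \o G3)) (filter isw s2) = [::].
  rewrite /= ka; first by case: r1.
  by apply: q3; apply: wp_Gi hs2.
by rewrite cats0.
Qed.

End Proofs.

Theorem lemma6p3 (R : realType) (B : algType R[i]) (I : Type)
  (Xo : I -> bimod B)
  (S : I -> (X Xo -> X Xo) -> Prop)
  (hS : forall (l : I) (T : X Xo -> X Xo), S l T -> in_AF l T \/ in_AB l T)
  (i j : I) (hij : i <> j) (A1 A2 : X Xo -> X Xo)
  (hA1 : simple_prod (S i) A1) (hA2 : simple_prod (S j) A2)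
  (hbool : boolean_prod i (S i) A1) :
  A1 (A2 (embB Xo 1)) = A1 (embB Xo (EL A2)).
Proof. exact: (main_gen hS hij hA2 hbool). Qed.
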